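(* Consider the genetic algorithm with adaptive population size (APGA) described in the context, with maximum lifetime parameter $MaxLT$ and an arbitrary initial population size $P(0)\ge 1$. Then, regardless of $P(0)$, the population size after $MaxLT$ generations satisfies $$P(MaxLT) \le 2\,MaxLT + 1.$$
   Context: APGA is a steady-state genetic algorithm in which every individual carries a remaining lifetime (RLT). Parameters: an initial population size $P(0)$ and lifetime bounds $1\le MinLT\le MaxLT$; every individual, whether in the initial population or newly created, is assigned at creation a lifetime (its initial RLT) which is a positive integer between $MinLT$ and $MaxLT$ (the assignment may depend on fitness, e.g. via a bi-linear rule, but never exceeds $MaxLT$). Generation $t\ge 1$ proceeds as follows, starting from the population at the end of generation $t-1$: (1) decrement by 1 the RLT of every member except the best (highest-fitness) member of the population; (2) select 2 individuals, apply crossover and mutation to obtain 2 offspring, evaluate them and insert them into the population; (3) remove from the population all members whose RLT equals 0; (4) assign lifetimes (RLT values) to the 2 new members. $P(t)$ denotes the population size at the end of generation $t$, and $P(0)$ the size of the initial population. *)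

(* Defs.v *)
From mathcomp Require Import all_boot all_order.
Set Implicit Arguments. Unset Strict Implicit. Unset Printing Implicit Defensive.
Import Order.TTheory.
Local Open Scope order_scope.

(* An individual (fitness, identifier, RLT): a fitness value (in an arbitrary totally ordered type),
   a unique identifier (used only to make "the best member" well defined
   when fitnesses tie), and its remaining lifetime (RLT). *)
Definition indiv (d : Order.disp_t) (T : orderType d) : Type := (T * nat * nat)%type.
Definition Indiv d (T : orderType d) (f : T) (i r : nat) : indiv T := (f, i, r).
Definition fit d (T : orderType d) (x : indiv T) : T := x.1.1.
Definition uid d (T : orderType d) (x : indiv T) : nat := x.1.2.
Definition rlt d (T : orderType d) (x : indiv T) : nat := x.2.

Section APGA.
Variables (d : Order.disp_t) (T : orderType d).

Definition population := seq (indiv T).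

Definition worse (y b : indiv T) : bool :=
  (fit y < fit b) || ((fit y == fit b) && (uid b < uid y)%N).

Definition is_best (p : population) (b : indiv T) : Prop :=
  b \in p /\ forall y, y \in p -> uid y != uid b -> worse y b.

Definition ids (p : population) : seq nat := map (@uid _ T) p.

Definition decr_except (b : indiv T) (p : population) : population :=
  map (fun y => if uid y == uid b then y
                else Indiv (fit y) (uid y) (rlt y).-1) p.

(* One generation t >= 1, from population p (end of t-1) to p' (end of t):
   (1) decrement RLTs except the best member's, (2) create two offspring
   (arbitrary fitness; fresh identifiers), (3) remove the old members whose
   RLT is 0 (offspring have no lifetime yet and are not removed),
   (4) assign the offspring lifetimes in [MinLT, MaxLT]. *)
Definition apga_step (MinLT MaxLT : nat) (p p' : population) : Prop :=
  exists b f1 f2 i1 i2 l1 l2,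
    is_best p b /\
    i1 \notin ids p /\ i2 \notin ids p /\ i1 != i2 /\
    (MinLT <= l1 <= MaxLT)%N /\ (MinLT <= l2 <= MaxLT)%N /\
    p' = [seq y <- decr_except b p | rlt y != 0%N]
           ++ [:: Indiv f1 i1 l1; Indiv f2 i2 l2].

Definition apga_init (MinLT MaxLT : nat) (p : population) : Prop :=
  (0 < size p)%N /\ uniq (ids p) /\
  forall y, y \in p -> (MinLT <= rlt y <= MaxLT)%N.

End APGA.

(* Main.v *)
Require Import Defs.
From mathcomp Require Import all_boot all_order.
From mathcomp Require Import zify.
Set Implicit Arguments. Unset Strict Implicit. Unset Printing Implicit Defensive.
Import Order.TTheory.
Local Open Scope order_scope.

Section H.
Variables (d : Order.disp_t) (T : orderType d).

Lemma worse_irr (x : indiv T) : ~~ worse x x.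
Proof. by rewrite /worse ltxx ltnn eqxx. Qed.

Lemma worse_trans (x y z : indiv T) : worse x y -> worse y z -> worse x z.
Proof.
rewrite /worse => /orP[H1|/andP[/eqP E1 H1]] /orP[H2|/andP[/eqP E2 H2]].
- by rewrite (lt_trans H1 H2).
- by rewrite -E2 H1.
- by rewrite E1 H2.
- by rewrite E1 E2 eqxx (ltn_trans H2 H1) orbT.
Qed.

Lemma uid_inj (p : population T) x y : uniq (ids p) -> x \in p -> y \in p ->
  uid x = uid y -> x = y.
Proof.
elim: p => //= a p IH /andP[Hna Hu]; rewrite !inE.
move=> /predU1P[->|Hx] /predU1P[->|Hy] E //.
- by move: Hna; rewrite E (map_f (@uid _ T) Hy).
- by move: Hna; rewrite -E (map_f (@uid _ T) Hx).
- exact: IH.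
Qed.

Lemma ids_decr b (p : population T) : ids (decr_except b p) = ids p.
Proof.
rewrite /ids /decr_except -map_comp; apply: eq_map => y /=.
by case: ifP.
Qed.

End H.

Theorem theorem1 (d : Order.disp_t) (T : orderType d) (MinLT MaxLT : nat)
  (run : nat -> population T) :
  (1 <= MinLT <= MaxLT)%N ->
  apga_init MinLT MaxLT (run 0%N) ->
  (forall t, apga_step MinLT MaxLT (run t) (run t.+1)) ->
  (size (run MaxLT) <= 2 * MaxLT + 1)%N.
Proof.
move=> /andP[Hmin HmM] [Hsz0 [Hu0 Hl0]] Hstep.
have [b0 [_ [_ [_ [_ [_ [_ [Hb0 _]]]]]]]] := Hstep 0%N.
set u0 := uid b0.
have Inv : forall t, [/\ uniq (ids (run t)),
    (forall y, y \in run t -> 0 < rlt y)%N &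
    exists O Y, [/\ run t = O ++ Y, (size Y <= 2 * t)%N &
      exists2 c, c \in run t & forall y, y \in O -> uid y != u0 ->
         worse y c /\ (rlt y + t <= MaxLT)%N]].
  elim=> [|t [Hu Hr [O [Y [Ht HY [c Hc HO]]]]]].
    split => //.
      by move=> y /Hl0 /andP[H _]; apply: leq_trans H.
    exists (run 0%N), [::]; split; first by rewrite cats0.
      by [].
    exists b0; first by case: Hb0.
    move=> y Hy Hne; split; first by case: Hb0 => _ /(_ y Hy Hne).
    by rewrite addn0; case/andP: (Hl0 y Hy).
  have [b [f1 [f2 [i1 [i2 [l1 [l2 [[Hbin Hbest] [Hi1 [Hi2 [Hi12 [Hl1 [Hl2 Hrun]]]]]]]]]]]]] := Hstep t.
  have Hsub : subseq (ids [seq y <- decr_except b (run t) | rlt y != 0%N]) (ids (run t)).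
    by rewrite -[X in subseq _ X](ids_decr b) /ids; apply: map_subseq; apply: filter_subseq.
  have bnotold : forall y, y \in run t -> worse y c -> uid y != uid b.
    move=> y Hy Hw; apply/negP => /eqP E.
    have yb := uid_inj Hu Hy Hbin E; subst y.
    case: (eqVneq (uid c) (uid b)) => Ecb.
      by have := uid_inj Hu Hc Hbin Ecb => cb; subst c; move: (worse_irr b); rewrite Hw.
    by move: (worse_irr b); rewrite (worse_trans Hw (Hbest c Hc Ecb)).
  split.
  - rewrite Hrun /ids map_cat cat_uniq /=.
    rewrite (subseq_uniq Hsub Hu) /= inE negb_or Hi12 /= andbT.
    rewrite orbF; apply/andP; split; apply/negP => Hin.
      by move: Hi1; rewrite (mem_subseq Hsub Hin).
    by move: Hi2; rewrite (mem_subseq Hsub Hin).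
  - move=> y; rewrite Hrun mem_cat mem_filter !inE => /orP[/andP[H _]|/orP[]/eqP->].
    + by rewrite lt0n.
    + by case/andP: Hl1 => H _ /=; apply: leq_trans H.
    + by case/andP: Hl2 => H _ /=; apply: leq_trans H.
  exists [seq y <- decr_except b O | rlt y != 0%N],
    ([seq y <- decr_except b Y | rlt y != 0%N] ++ [:: Indiv f1 i1 l1; Indiv f2 i2 l2]).
  split.
  - by rewrite Hrun Ht /decr_except map_cat filter_cat catA.
  - by rewrite size_cat /= size_filter; have := count_size (fun y => rlt y != 0%N) (decr_except b Y); rewrite size_map; lia.
  exists b.
    rewrite Hrun mem_cat mem_filter; apply/orP; left; apply/andP; split.
      by rewrite -lt0n; apply: Hr.
    apply/mapP; exists b => //; by rewrite eqxx.
  move=> y'; rewrite mem_filter => /andP[Hy'0 /mapP[y Hy ->]] .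
  have Hyt : y \in run t by rewrite Ht mem_cat Hy.
  case: (eqVneq (uid y) u0) => [E | Hne]; first by case: ifP => _ /=; rewrite /uid /= -/(uid y) E eqxx.
  have [Hw Hrl] := HO y Hy Hne.
  have Hyb := bnotold y Hyt Hw.
  rewrite (negbTE Hyb) /= => _; split.
  - have Hwb : worse y b.
      case: (eqVneq (uid c) (uid b)) => Ecb.
        by have := uid_inj Hu Hc Hbin Ecb => cb; subst c.
      exact: worse_trans Hw (Hbest c Hc Ecb).
    by move: Hwb; rewrite /worse.
  - have := Hr y Hyt; rewrite /rlt /= in Hrl *; lia.
have [Hu Hr [O [Y [Ht HY [c Hc HO]]]]] := Inv MaxLT.
have HO1 : (size O <= 1)%N.
  have Hall : forall y, y \in O -> uid y = u0.
    move=> y Hy; apply/eqP; apply/negP => /negP Hne.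
    have [_ H] := HO y Hy Hne.
    have := Hr y; rewrite Ht mem_cat Hy => /(_ isT); lia.
  have HuO : uniq (ids O) by move: Hu; rewrite Ht /ids map_cat cat_uniq => /andP[].
  have : {subset ids O <= [:: u0]}.
    by move=> z /mapP[y Hy ->]; rewrite inE Hall.
  move/(uniq_leq_size HuO); by rewrite /ids size_map.
by rewrite Ht size_cat; lia.
Qed.
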